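(* Let $(A,\circ,[\cdot,\cdot])$ be a finite-dimensional dual pre-Poisson algebra and let $r\in A\otimes A$ be symmetric. Then $r$ is a solution of the permutative-Leibniz Yang–Baxter equation if and only if $\tilde r:A^*\to A$ satisfies, for all $a^*,b^*\in A^*$, $$\tilde r(a^* )\circ\tilde r(b^* )=\tilde r\big(-L_\circ^*(\tilde r(a^* ))b^*-L_\blacksquare^*(\tilde r(b^* ))a^*\big),$$ $$[\tilde r(a^* ),\tilde r(b^* )]=\tilde r\big(L_{[\cdot,\cdot]}^*(\tilde r(a^* ))b^*-L_\square^*(\tilde r(b^* ))a^*\big),$$ i.e. $\tilde r$ is an $\mathcal{O}$-operator on $(A,\circ,[\cdot,\cdot])$ associated to the representation $(A^*;-L_\circ^*,-L_\blacksquare^*,L_{[\cdot,\cdot]}^*,-L_\square^* )$.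
   Context: Field $\mathbb{F}$ of characteristic $0$. Dual pre-Poisson algebra: $x\circ(y\circ z)=(x\circ y)\circ z=(y\circ x)\circ z$; $[x,[y,z]]=[[x,y],z]+[y,[x,z]]$; $[x,y\circ z]=[x,y]\circ z+y\circ[x,z]$; $[x\circ y,z]=x\circ[y,z]+y\circ[x,z]$; $[x,y]\circ z=-[y,x]\circ z$. $x\blacksquare y=x\circ y-y\circ x$, $x\square y=[x,y]+[y,x]$; $L_\diamond(x)y=x\diamond y$; for $f:A\to\mathrm{End}(A)$, $\langle f^*(x)a^*,y\rangle=-\langle a^*,f(x)y\rangle$. For $r\in A\otimes A$, $\tilde r:A^*\to A$ is defined by $\langle\tilde r(u^* ),v^*\rangle=\langle r,u^*\otimes v^*\rangle$. Symmetric means invariant under the flip. PLYBE: for $r=\sum_i a_i\otimes b_i$, $\mathbf{P}(r)=\sum_{i,j}\big(a_i\otimes a_j\otimes b_i\circ b_j-a_i\otimes b_i\circ a_j\otimes b_j+a_i\blacksquare a_j\otimes b_j\otimes b_i\big)$, $\mathbf{L}(r)=\sum_{i,j}\big(a_i\otimes a_j\otimes[b_i,b_j]+a_i\otimes[b_i,a_j]\otimes b_j-a_i\square a_j\otimes b_i\otimes b_j\big)$; $r$ is a solution if $\mathbf{P}(r)=\mathbf{L}(r)=0$. *)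

(* Defs.v *)
(* A finite-dimensional vector space A over F is modelled as
   'rV[F]_n (coordinates in the standard basis e_0..e_{n-1}); the dual space is
   also 'rV[F]_n with the pairing <a, y> = \sum_i a*_i y_i; A (x) A is 'M[F]_n
   (r = \sum_{i,j} r i j e_i (x) e_j); A (x) A (x) A is represented by
   coefficient functions 'I_n -> 'I_n -> 'I_n -> F. *)
From HB Require Import structures.
From mathcomp Require Import all_boot all_order all_algebra.
Set Implicit Arguments. Unset Strict Implicit. Unset Printing Implicit Defensive.
Import GRing.Theory.
Local Open Scope ring_scope.

Section Defs.
Variables (F : fieldType) (n : nat).
Notation A := 'rV[F]_n.

Definition bilinear_op (m : A -> A -> A) : Prop :=
  (forall (c : F) x y z, m (c *: x + y) z = c *: m x z + m y z) /\
  (forall (c : F) x y z, m x (c *: y + z) = c *: m x y + m x z).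

Definition dual_prepoisson (circ br : A -> A -> A) : Prop :=
  bilinear_op circ /\ bilinear_op br /\
  (forall x y z, circ x (circ y z) = circ (circ x y) z
                 /\ circ (circ x y) z = circ (circ y x) z) /\
  (forall x y z, br x (br y z) = br (br x y) z + br y (br x z)) /\
  (forall x y z, br x (circ y z) = circ (br x y) z + circ y (br x z)) /\
  (forall x y z, br (circ x y) z = circ x (br y z) + circ y (br x z)) /\
  (forall x y z, circ (br x y) z = - circ (br y x) z).

Definition bsq (circ : A -> A -> A) : A -> A -> A :=
  fun x y => circ x y - circ y x.
Definition sq (br : A -> A -> A) : A -> A -> A :=
  fun x y => br x y + br y x.

Definition ebase (j : 'I_n) : A := delta_mx 0 j.

Definition pair (a y : A) : F := \sum_i a 0 i * y 0 i.

(* f^* : <f^dual(x) a, y> = - <a, f(x) y>, with f = L_m, i.e. f(x) y = m x y *)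
Definition dualL (m : A -> A -> A) (x : A) (a : A) : A :=
  \row_j (- pair a (m x (ebase j))).

(* r~ : A^* -> A, <r~(u), v> = <r, u (x) v> *)
Definition rtilde (r : 'M[F]_n) (u : A) : A := \row_j \sum_i u 0 i * r i j.

Definition symmetric_tensor (r : 'M[F]_n) : Prop := r^T = r.

Definition tens3 (x y z : A) : 'I_n -> 'I_n -> 'I_n -> F :=
  fun p q s => x 0 p * y 0 q * z 0 s.

(* P(r) and L(r) for a decomposition r = \sum_i a_i (x) b_i *)
Definition Pfam (circ : A -> A -> A) (I : finType) (a b : I -> A) :=
  fun p q s => \sum_i \sum_j
    (tens3 (a i) (a j) (circ (b i) (b j)) p q s
     - tens3 (a i) (circ (b i) (a j)) (b j) p q s
     + tens3 (bsq circ (a i) (a j)) (b j) (b i) p q s).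

Definition Lfam (br : A -> A -> A) (I : finType) (a b : I -> A) :=
  fun p q s => \sum_i \sum_j
    (tens3 (a i) (a j) (br (b i) (b j)) p q s
     + tens3 (a i) (br (b i) (a j)) (b j) p q s
     - tens3 (sq br (a i) (a j)) (b i) (b j) p q s).

(* canonical decomposition r = \sum_{(i,j)} (r i j e_i) (x) e_j *)
Definition dec_a (r : 'M[F]_n) (ij : 'I_n * 'I_n) : A := r ij.1 ij.2 *: ebase ij.1.
Definition dec_b (r : 'M[F]_n) (ij : 'I_n * 'I_n) : A := ebase ij.2.

Definition PLYBE (circ br : A -> A -> A) (r : 'M[F]_n) : Prop :=
  (forall p q s, Pfam circ (dec_a r) (dec_b r) p q s = 0) /\
  (forall p q s, Lfam br (dec_a r) (dec_b r) p q s = 0).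

End Defs.

(* Main.v *)
Require Import Defs.
From HB Require Import structures.
From mathcomp Require Import all_boot all_order all_algebra.
From mathcomp Require Import ring.
Import GRing.Theory.
Local Open Scope ring_scope.
Set Implicit Arguments. Unset Strict Implicit.

Section Helpers.
Variables (F : fieldType) (n : nat).
Local Notation A := 'rV[F]_n.

Lemma pairDr (a u v : A) : pair a (u + v) = pair a u + pair a v.
Proof. rewrite /pair -big_split; apply eq_bigr => i _; by rewrite mxE mulrDr. Qed.
Lemma pairZr (a : A) k u : pair a (k *: u) = k * pair a u.
Proof. rewrite /pair mulr_sumr; apply eq_bigr => i _; by rewrite mxE mulrCA. Qed.
Lemma pair0r (a : A) : pair a 0 = 0.
Proof. rewrite /pair big1 // => i _; by rewrite mxE mulr0. Qed.
Lemma pairNr (a u : A) : pair a (- u) = - pair a u.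
Proof. by rewrite -scaleN1r pairZr mulN1r. Qed.
Lemma pair_sumr (a : A) (I : finType) (f : I -> A) :
  pair a (\sum_i f i) = \sum_i pair a (f i).
Proof. exact: (big_morph _ (pairDr a) (pair0r a)). Qed.
Lemma pairC (a u : A) : pair a u = pair u a.
Proof. rewrite /pair; apply eq_bigr => i _; by rewrite mulrC. Qed.

Lemma sum_e p (f : 'I_n -> F) : \sum_i (ebase F p : A) 0 i * f i = f p.
Proof.
rewrite (bigD1 p) //= big1 => [|i ne]; first by rewrite mxE !eqxx mul1r addr0.
by rewrite mxE (negbTE ne) andbF mul0r.
Qed.
Lemma sum_e' p (f : 'I_n -> F) : \sum_i f i * (ebase F i : A) 0 p = f p.
Proof.
rewrite (bigD1 p) //= big1 => [|i ne]; first by rewrite mxE !eqxx mulr1 addr0.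
by rewrite mxE eq_sym (negbTE ne) andbF mulr0.
Qed.
Lemma pair_e p (u : A) : pair (ebase F p) u = u 0 p.
Proof. exact: sum_e. Qed.

Lemma rowP_pair (u v : A) : (forall c, pair c u = pair c v) -> u = v.
Proof. move=> h; apply/rowP => j; by rewrite -!pair_e h. Qed.

Section Bil.
Variable m : A -> A -> A.
Hypothesis Hm : bilinear_op m.
Lemma mDl x y z : m (x + y) z = m x z + m y z.
Proof. by have := (Hm.1 1 x y z); rewrite !scale1r. Qed.
Lemma mDr x y z : m x (y + z) = m x y + m x z.
Proof. by have := (Hm.2 1 x y z); rewrite !scale1r. Qed.
Lemma m0l z : m 0 z = 0.
Proof. have h := mDl 0 0 z; rewrite addr0 in h.
by apply: (addrI (m 0 z)); rewrite addr0 -h. Qed.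
Lemma m0r z : m z 0 = 0.
Proof. have h := mDr z 0 0; rewrite addr0 in h.
by apply: (addrI (m z 0)); rewrite addr0 -h. Qed.
Lemma mZl k x z : m (k *: x) z = k *: m x z.
Proof. by have := (Hm.1 k x 0 z); rewrite !addr0 m0l addr0. Qed.
Lemma mZr k x z : m x (k *: z) = k *: m x z.
Proof. by have := (Hm.2 k x z 0); rewrite !addr0 m0r addr0. Qed.
Lemma msuml (I : finType) (f : I -> A) z : m (\sum_i f i) z = \sum_i m (f i) z.
Proof. exact: (big_morph (fun x => m x z) (fun x y => mDl x y z) (m0l z)). Qed.
Lemma msumr (I : finType) (f : I -> A) z : m z (\sum_i f i) = \sum_i m z (f i).
Proof. exact: (big_morph (fun x => m z x) (fun x y => mDr z x y) (m0r z)). Qed.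
Lemma msum2 (I J : finType) (k : I -> F) (u : I -> A) (l : J -> F) (v : J -> A) :
  m (\sum_i k i *: u i) (\sum_j l j *: v j) = \sum_i \sum_j (k i * l j) *: m (u i) (v j).
Proof.
rewrite msuml; apply eq_bigr => i _; rewrite mZl msumr scaler_sumr.
apply eq_bigr => j _; by rewrite mZr scalerA.
Qed.
Lemma pair_dualL (u x b : A) : pair u (dualL m x b) = - pair b (m x u).
Proof.
rewrite {2}(row_sum_delta u) msumr pair_sumr -sumrN.
apply eq_bigr => j _; rewrite mxE mZr pairZr mulrN //.
Qed.
Lemma bsq_bil : bilinear_op (bsq m).
Proof.
split=> c x y z; rewrite /bsq ?Hm.1 ?Hm.2 scalerBr opprD addrACA //.
Qed.
Lemma sq_bil : bilinear_op (sq m).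
Proof.
split=> c x y z; rewrite /sq ?Hm.1 ?Hm.2 scalerDr addrACA //.
Qed.
End Bil.

Definition trip (a b c : A) (t : 'I_n -> 'I_n -> 'I_n -> F) :=
  \sum_p \sum_q \sum_s a 0 p * b 0 q * c 0 s * t p q s.

Lemma tripE a b c t : trip a b c t = \sum_p a 0 p * (\sum_q b 0 q * (\sum_s c 0 s * t p q s)).
Proof.
rewrite /trip; apply eq_bigr => p _; rewrite big_distrr; apply eq_bigr => q _.
rewrite !big_distrr; apply eq_bigr => s _ /=; by rewrite !mulrA.
Qed.
Lemma trip_e p q s t : trip (ebase F p) (ebase F q) (ebase F s) t = t p q s.
Proof. by rewrite tripE !sum_e. Qed.
Lemma trip_tens3 a b c u v w : trip a b c (tens3 u v w) = pair a u * pair b v * pair c w.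
Proof.
symmetry; rewrite /trip /pair big_distrlr big_distrl /=; apply eq_bigr => p _.
rewrite big_distrl /=; apply eq_bigr => q _.
rewrite big_distrr /=; apply eq_bigr => s _.
rewrite /tens3; ring.
Qed.
Lemma trip_sum (J : finType) a b c (f : J -> 'I_n -> 'I_n -> 'I_n -> F) :
  trip a b c (fun p q s => \sum_x f x p q s) = \sum_x trip a b c (f x).
Proof.
rewrite /trip.
under eq_bigr => p _ do under eq_bigr => q _ do under eq_bigr => s _ do rewrite big_distrr.
under eq_bigr => p _ do under eq_bigr => q _ do rewrite exchange_big.
under eq_bigr => p _ do rewrite exchange_big.
by rewrite exchange_big.
Qed.
Lemma trip_D a b c t1 t2 :
  trip a b c (fun p q s => t1 p q s + t2 p q s) = trip a b c t1 + trip a b c t2.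
Proof.
rewrite /trip -big_split; apply eq_bigr => p _; rewrite -big_split; apply eq_bigr => q _.
rewrite -big_split; apply eq_bigr => s _; by rewrite mulrDr.
Qed.
Lemma trip_B a b c t1 t2 :
  trip a b c (fun p q s => t1 p q s - t2 p q s) = trip a b c t1 - trip a b c t2.
Proof.
rewrite /trip -sumrB; apply eq_bigr => p _; rewrite -sumrB; apply eq_bigr => q _.
rewrite -sumrB; apply eq_bigr => s _; by rewrite mulrBr.
Qed.
Lemma trip0 a b c t : (forall p q s, t p q s = 0) -> trip a b c t = 0.
Proof.
move=> h; rewrite /trip big1 // => p _; rewrite big1 // => q _; rewrite big1 // => s _.
by rewrite h mulr0.
Qed.
End Helpers.

Section Key.
Variables (F : fieldType) (n : nat).
Local Notation A := 'rV[F]_n.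
Variable m : A -> A -> A.
Hypothesis Hm : bilinear_op m.
Variable T : A -> A.
Variables (I : finType) (a b : I -> A).
Hypothesis T1 : forall u, T u = \sum_x pair u (a x) *: b x.
Hypothesis T2 : forall u, T u = \sum_x pair u (b x) *: a x.

Lemma keyP u v w :
  pair w (m (T u) (T v)) - pair v (m (T u) (T w)) + pair u (bsq m (T w) (T v))
  = trip u v w (Pfam m a b).
Proof.
have e1 : pair w (m (T u) (T v)) =
   \sum_x \sum_y pair u (a x) * pair v (a y) * pair w (m (b x) (b y)).
  rewrite (T1 u) (T1 v) (msum2 Hm) pair_sumr; apply eq_bigr => x _.
  rewrite pair_sumr; apply eq_bigr => y _; by rewrite pairZr.
have e2 : pair v (m (T u) (T w)) =
   \sum_x \sum_y pair u (a x) * pair v (m (b x) (a y)) * pair w (b y).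
  rewrite (T1 u) (T2 w) (msum2 Hm) pair_sumr; apply eq_bigr => x _.
  rewrite pair_sumr; apply eq_bigr => y _; rewrite pairZr; ring.
have e3 : pair u (bsq m (T w) (T v)) =
   \sum_x \sum_y pair u (bsq m (a x) (a y)) * pair v (b y) * pair w (b x).
  rewrite (T2 w) (T2 v) (msum2 (bsq_bil Hm)) pair_sumr; apply eq_bigr => x _.
  rewrite pair_sumr; apply eq_bigr => y _; rewrite pairZr; ring.
rewrite e1 e2 e3 /Pfam trip_sum.
under [RHS]eq_bigr => x _ do rewrite trip_sum.
under [RHS]eq_bigr => x _ do under eq_bigr => y _ do rewrite trip_D trip_B !trip_tens3.
under [RHS]eq_bigr => x _ do rewrite big_split sumrB /=.
by rewrite big_split sumrB.
Qed.

Lemma keyL u v w :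
  pair w (m (T u) (T v)) + pair v (m (T u) (T w)) - pair u (sq m (T v) (T w))
  = trip u v w (Lfam m a b).
Proof.
have e1 : pair w (m (T u) (T v)) =
   \sum_x \sum_y pair u (a x) * pair v (a y) * pair w (m (b x) (b y)).
  rewrite (T1 u) (T1 v) (msum2 Hm) pair_sumr; apply eq_bigr => x _.
  rewrite pair_sumr; apply eq_bigr => y _; by rewrite pairZr.
have e2 : pair v (m (T u) (T w)) =
   \sum_x \sum_y pair u (a x) * pair v (m (b x) (a y)) * pair w (b y).
  rewrite (T1 u) (T2 w) (msum2 Hm) pair_sumr; apply eq_bigr => x _.
  rewrite pair_sumr; apply eq_bigr => y _; rewrite pairZr; ring.
have e3 : pair u (sq m (T v) (T w)) =
   \sum_x \sum_y pair u (sq m (a x) (a y)) * pair v (b x) * pair w (b y).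
  rewrite (T2 v) (T2 w) (msum2 (sq_bil Hm)) pair_sumr; apply eq_bigr => x _.
  rewrite pair_sumr; apply eq_bigr => y _; rewrite pairZr; ring.
rewrite e1 e2 e3 /Lfam trip_sum.
under [RHS]eq_bigr => x _ do rewrite trip_sum.
under [RHS]eq_bigr => x _ do under eq_bigr => y _ do rewrite trip_B trip_D !trip_tens3.
under [RHS]eq_bigr => x _ do rewrite sumrB big_split /=.
by rewrite sumrB big_split.
Qed.
End Key.

Section Rt.
Variables (F : fieldType) (n : nat).
Local Notation A := 'rV[F]_n.
Variable r : 'M[F]_n.
Hypothesis Hs : symmetric_tensor r.
Lemma rs i j : r i j = r j i.
Proof. by rewrite -{1}Hs mxE. Qed.

Lemma sum_pair (G : 'I_n -> 'I_n -> F) :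
  \sum_(x : 'I_n * 'I_n) G x.1 x.2 = \sum_i \sum_k G i k.
Proof. by rewrite pair_bigA. Qed.

Lemma rT1 u : rtilde r u = \sum_x pair u (dec_a r x) *: dec_b r x.
Proof.
apply/rowP => j; rewrite !mxE summxE /dec_a /dec_b.
rewrite (sum_pair (fun i k => (pair u (r i k *: ebase F i) *: ebase F k) 0 j)).
apply eq_bigr => i _.
under eq_bigr => k _ do rewrite mxE pairZr pairC pair_e.
by rewrite (sum_e' j (fun k => r i k * u 0 i)) mulrC.
Qed.

Lemma rT2 u : rtilde r u = \sum_x pair u (dec_b r x) *: dec_a r x.
Proof.
apply/rowP => j; rewrite !mxE summxE /dec_a /dec_b.
rewrite (sum_pair (fun i k => (pair u (ebase F k) *: (r i k *: ebase F i)) 0 j)).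
rewrite exchange_big /=.
apply eq_bigr => k _.
under eq_bigr => i _ do rewrite !mxE pairC pair_e mulrA.
rewrite (bigD1 j) //= big1 => [|i ne]; first by rewrite !eqxx mulr1 addr0 rs.
by rewrite eq_sym (negbTE ne) mulr0.
Qed.

Lemma pair_rt c u : pair c (rtilde r u) = pair (rtilde r c) u.
Proof.
rewrite /pair.
under eq_bigr do rewrite mxE big_distrr.
under [RHS]eq_bigr do rewrite mxE big_distrl.
rewrite exchange_big; apply eq_bigr => i _; apply eq_bigr => j _ /=.
rewrite (rs j i); ring.
Qed.
End Rt.

Unset Implicit Arguments.
Set Strict Implicit.

Theorem proposition3p19 (F : fieldType) (n : nat)
    (circ br : 'rV[F]_n -> 'rV[F]_n -> 'rV[F]_n) (r : 'M[F]_n) :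
  [pchar F] =i pred0 ->
  dual_prepoisson circ br ->
  symmetric_tensor r ->
  PLYBE circ br r <->
  (forall a b : 'rV[F]_n,
      circ (rtilde r a) (rtilde r b)
        = rtilde r (- dualL circ (rtilde r a) b - dualL (bsq circ) (rtilde r b) a)
   /\ br (rtilde r a) (rtilde r b)
        = rtilde r (dualL br (rtilde r a) b - dualL (sq br) (rtilde r b) a)).
Proof.
move=> _ [Hc [Hb _]] Hs.
set T := rtilde r.
have T1 : forall u, T u = \sum_x pair u (dec_a r x) *: dec_b r x.
  by move=> u; exact: (@rT1 _ _ r u).
have T2 : forall u, T u = \sum_x pair u (dec_b r x) *: dec_a r x.
  by move=> u; exact: (@rT2 _ _ r Hs u).
have KP := keyP Hc T1 T2. have KL := keyL Hb T1 T2.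
have E1 : forall x y,
  circ (T x) (T y) = T (- dualL circ (T x) y - dualL (bsq circ) (T y) x) <->
  (forall w, trip x y w (Pfam circ (dec_a r) (dec_b r)) = 0).
  move=> x y.
  have E : forall w, pair w (T (- dualL circ (T x) y - dualL (bsq circ) (T y) x))
     = pair y (circ (T x) (T w)) - pair x (bsq circ (T w) (T y)).
    move=> w; rewrite /T pair_rt // pairDr !pairNr (pair_dualL Hc) (pair_dualL (bsq_bil Hc)).
    rewrite /bsq !pairDr !pairNr; ring.
  split => [h w | h].
    rewrite -KP h E; ring.
  apply rowP_pair => w; rewrite E.
  have hw := h w; rewrite -KP in hw.
  set P1 := pair w _ in hw *.
  have -> : P1 = (P1 - pair y (circ (T x) (T w)) + pair x (bsq circ (T w) (T y)))
     + pair y (circ (T x) (T w)) - pair x (bsq circ (T w) (T y)) by ring.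
  rewrite hw; ring.
have E2 : forall x y,
  br (T x) (T y) = T (dualL br (T x) y - dualL (sq br) (T y) x) <->
  (forall w, trip x y w (Lfam br (dec_a r) (dec_b r)) = 0).
  move=> x y.
  have E : forall w, pair w (T (dualL br (T x) y - dualL (sq br) (T y) x))
     = - pair y (br (T x) (T w)) + pair x (sq br (T y) (T w)).
    move=> w; rewrite /T pair_rt // pairDr !pairNr (pair_dualL Hb) (pair_dualL (sq_bil Hb)).
    ring.
  split => [h w | h].
    rewrite -KL h E; ring.
  apply rowP_pair => w; rewrite E.
  have hw := h w; rewrite -KL in hw.
  set P1 := pair w _ in hw *.
  have -> : P1 = (P1 + pair y (br (T x) (T w)) - pair x (sq br (T y) (T w)))
     - pair y (br (T x) (T w)) + pair x (sq br (T y) (T w)) by ring.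
  rewrite hw; ring.
split.
  move=> [HP HL] x y; split.
    by apply/E1 => w; apply: trip0.
  by apply/E2 => w; apply: trip0.
move=> h; split => p q s.
  by rewrite -(trip_e p q s); apply: ((E1 _ _).1 (h _ _).1).
by rewrite -(trip_e p q s); apply: ((E2 _ _).1 (h _ _).2).
Qed.
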